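(* Let $\mathcal R$ be a left-linear TRS and $s,t,u$ terms. (1) If $t\leftarrow_{\mathcal R}s\to_{\mathcal R}u$ then there is a term $v$ with $t\,\nabla_s\,v$ and $v\,\nabla_s\,u$. (2) If $t\leftarrow_{\mathcal R}s\leftrightarrow_{\mathcal B}u$ then there is a term $v$ with $t\,\nabla_s\,v$ and $v\,\tilde\nabla_s\,u$.
   Context: Terms are built from a signature $\mathcal F$ and variables $\mathcal V$. A rule $\ell\to r$ is a pair of terms with $\ell\notin\mathcal V$ and $\mathrm{Var}(r)\subseteq\mathrm{Var}(\ell)$; a TRS is a set of rules, an ES a set of equations; a TRS is left-linear if no left-hand side contains a variable twice. For a set $\mathcal E$ of pairs of terms, $s\to_{\mathcal E}t$ iff $s|_p=\ell\sigma$ and $t=s[r\sigma]_p$ for some $(\ell,r)\in\mathcal E$, position $p$ and substitution $\sigma$; $\leftarrow_{\mathcal E}$ is its inverse and $\leftrightarrow_{\mathcal E}$ its symmetric closure. $\mathcal B$ is a fixed ES with $\mathrm{Var}(\ell)=\mathrm{Var}(r)$ for all $\ell\approx r\in\mathcal B$; $\sim_{\mathcal B}=\leftrightarrow^*_{\mathcal B}$ and $\mathcal B^\pm=\mathcal B\cup\{t\approx s\mid s\approx t\in\mathcal B\}$. For a TRS $\mathcal R$: $\downarrow_{\mathcal R}=\to^*_{\mathcal R}\cdot\leftarrow^*_{\mathcal R}$ and $s\downarrow^\sim_{\mathcal R}t$ iff $s\to^*_{\mathcal R}\cdot\sim_{\mathcal B}\cdot\leftarrow^*_{\mathcal R}t$.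 Critical pairs: for sets of oriented pairs $\mathcal R_1,\mathcal R_2$ (equations of $\mathcal B^\pm$ read as oriented pairs), an overlap is $\langle\ell_1\to r_1,p,\ell_2\to r_2\rangle$ with $\ell_i\to r_i$ variants of elements of $\mathcal R_i$ without common variables, $p$ a non-variable position of $\ell_2$, $\ell_1$ and $\ell_2|_p$ unifiable, and the two rules not variants of each other if $p=\epsilon$. With an mgu $\sigma$ this yields the critical peak $\ell_2\sigma[r_1\sigma]_p\leftarrow^p\ell_2\sigma\to^\epsilon r_2\sigma$ and critical pair $\ell_2\sigma[r_1\sigma]_p\approx r_2\sigma$. A critical peak $t\leftarrow^p s\to^\epsilon u$ is prime if all proper subterms of $s|_p$ are normal forms of $\to_{\mathcal R}$ (irreducibility is always checked w.r.t. $\mathcal R$, also for overlaps involving $\mathcal B^\pm$). $\mathrm{PCP}(\mathcal R)$ is the set of prime critical pairs from overlaps of $\mathcal R$ with itself; $\mathrm{PCP}^\pm(\mathcal R,\mathcal B^\pm)$ is the set of prime critical pairs from overlaps $\langle\rho_1,p,\rho_2\rangle$ with $\rho_1\in\mathcal R,\rho_2\in\mathcal B^\pm$ or $\rho_1\in\mathcal B^\pm,\rho_2\in\mathcal R$. Triangle notation: $t\,\nabla_s\,u$ iff $s\to^+_{\mathcal R}t$, $s\to^+_{\mathcal R}u$, and ($t\downarrow_{\mathcal R}u$ or $t\leftrightarrow_{\mathrm{PCP}(\mathcal R)}u$). $t\,\tilde\nabla_s\,u$ iff $s\to^+_{\mathcal R}t$, $s\sim_{\mathcal B}u$, and ($t\downarrow^\sim_{\mathcal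 R}u$ or $t\leftrightarrow_{\mathrm{PCP}^\pm(\mathcal R,\mathcal B^\pm)}u$). *)

(* Defs.v *)
From Stdlib Require Import List Relations.
Import ListNotations.
Set Implicit Arguments.

(* Terms over function symbols F and variables nat (a countably infinite
   variable set). Function symbols are variadic (arity not enforced). *)
Inductive term (F : Type) : Type :=
| Var (x : nat)
| Fun (f : F) (ts : list (term F)).
Arguments Var {F} x.

Section Terms.
Variable F : Type.

Definition sub := nat -> term F.

Fixpoint subst (s : sub) (t : term F) : term F :=
  match t with
  | Var x => s x
  | Fun f ts => Fun f (map (subst s) ts)
  end.

Fixpoint vars (t : term F) : list nat :=
  match t with
  | Var x => [x]
  | Fun _ ts => flat_map vars ts
  end.

Definition pos := list nat.

Fixpoint subt_at (t : term F) (p : pos) : option (term F) :=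
  match p, t with
  | [], _ => Some t
  | i :: q, Fun _ ts =>
      match nth_error ts i with Some ti => subt_at ti q | None => None end
  | _ :: _, Var _ => None
  end.

Fixpoint replace_at (t : term F) (p : pos) (u : term F) : option (term F) :=
  match p, t with
  | [], _ => Some u
  | i :: q, Fun f ts =>
      match nth_error ts i with
      | Some ti =>
          match replace_at ti q u with
          | Some ti' => Some (Fun f (firstn i ts ++ ti' :: skipn (S i) ts))
          | None => None
          end
      | None => None
      end
  | _ :: _, Var _ => None
  end.

Definition pairs := term F -> term F -> Prop.

Definition rstep (E : pairs) (s t : term F) : Prop :=
  exists l r (p : pos) (sg : sub),
    E l r /\ subt_at s p = Some (subst sg l) /\ replace_at s p (subst sg r) = Some t.

Definition sym_step (E : pairs) (s t : term F) : Prop := rstep E s t \/ rstep E t s.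

Definition is_rule (l r : term F) : Prop :=
  (forall x, l <> Var x) /\ incl (vars r) (vars l).

Definition TRS (R : pairs) : Prop := forall l r, R l r -> is_rule l r.

Definition left_linear (R : pairs) : Prop := forall l r, R l r -> NoDup (vars l).

Definition ES_B (B : pairs) : Prop :=
  forall l r, B l r -> forall x, In x (vars l) <-> In x (vars r).

Definition Bpm (B : pairs) : pairs := fun l r => B l r \/ B r l.

Definition B_equiv (B : pairs) : term F -> term F -> Prop :=
  clos_refl_trans _ (sym_step B).

Definition NF (R : pairs) (t : term F) : Prop := ~ exists u, rstep R t u.

Definition joinable (R : pairs) (t u : term F) : Prop :=
  exists v, clos_refl_trans _ (rstep R) t v /\ clos_refl_trans _ (rstep R) u v.

Definition joinable_B (B R : pairs) (t u : term F) : Prop :=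
  exists t' u', clos_refl_trans _ (rstep R) t t' /\ B_equiv B t' u'
    /\ clos_refl_trans _ (rstep R) u u'.

Definition renaming (pi : nat -> nat) : sub := fun x => Var (pi x).

Definition bijective_nat (pi : nat -> nat) : Prop :=
  exists pi', (forall x, pi' (pi x) = x) /\ (forall x, pi (pi' x) = x).

Definition variant (l r l' r' : term F) : Prop :=
  exists pi, bijective_nat pi /\ l = subst (renaming pi) l' /\ r = subst (renaming pi) r'.

Definition unifier (sg : sub) (a b : term F) : Prop := subst sg a = subst sg b.

Definition mgu (sg : sub) (a b : term F) : Prop :=
  unifier sg a b /\
  forall tau, unifier tau a b -> exists dl, forall x, tau x = subst dl (sg x).

Definition prime_cp (R E1 E2 : pairs) (t u : term F) : Prop :=
  exists l1 r1 l2 r2 l1' r1' l2' r2' (p : pos) (sg : sub) (l2p : term F),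
    E1 l1' r1' /\ variant l1 r1 l1' r1' /\
    E2 l2' r2' /\ variant l2 r2 l2' r2' /\
    (forall x, In x (vars l1 ++ vars r1) -> ~ In x (vars l2 ++ vars r2)) /\
    subt_at l2 p = Some l2p /\ (exists f ts, l2p = Fun f ts) /\
    mgu sg l1 l2p /\
    (p = [] -> ~ variant l1 r1 l2 r2) /\
    replace_at (subst sg l2) p (subst sg r1) = Some t /\
    u = subst sg r2 /\
    (forall sp, subt_at (subst sg l2) p = Some sp ->
       forall q w, q <> [] -> subt_at sp q = Some w -> NF R w).

Definition PCP (R : pairs) : pairs := prime_cp R R R.

Definition PCPpm (R B : pairs) : pairs :=
  fun t u => prime_cp R R (Bpm B) t u \/ prime_cp R (Bpm B) R t u.

Definition nabla (R : pairs) (s t u : term F) : Prop :=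
  clos_trans _ (rstep R) s t /\ clos_trans _ (rstep R) s u /\
  (joinable R t u \/ sym_step (PCP R) t u).

Definition tnabla (B R : pairs) (s t u : term F) : Prop :=
  clos_trans _ (rstep R) s t /\ B_equiv B s u /\
  (joinable_B B R t u \/ sym_step (PCPpm R B) t u).

End Terms.

(* Main.v *)
Require Import Defs.
From Stdlib Require Import List Relations Arith Lia Classical.
Import ListNotations.
Set Implicit Arguments.


Section S.
Context {F : Type}.
Implicit Types (t u s w : term F) (sg : sub F).

Definition term_ind' (P : term F -> Prop)
  (HV : forall x, P (Var x))
  (HF : forall f ts, Forall P ts -> P (Fun f ts)) : forall t, P t :=
  fix go t := match t with
  | Var x => HV x
  | Fun f ts => HF f ts ((fix gl l : Forall P l := match l with
       | [] => Forall_nil _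
       | a :: l' => Forall_cons _ (go a) (gl l') end) ts)
  end.

Lemma subst_ext_in : forall t (a b : sub F),
  (forall x, In x (vars t) -> a x = b x) -> subst a t = subst b t.
Proof.
  induction t as [x|f ts IH] using term_ind'; simpl; intros a b H.
  - apply H; auto.
  - f_equal. induction IH as [|t ts Ht Hts IHl]; simpl in *; auto.
    f_equal.
    + apply Ht. intros x Hx. apply H. apply in_or_app; auto.
    + apply IHl. intros x Hx. apply H. apply in_or_app; auto.
Qed.

Lemma subst_ext : forall t (a b : sub F), (forall x, a x = b x) -> subst a t = subst b t.
Proof. intros; apply subst_ext_in; auto. Qed.

Lemma subst_comp : forall t (a b : sub F),
  subst a (subst b t) = subst (fun x => subst a (b x)) t.
Proof.
  induction t as [x|f ts IH] using term_ind'; simpl; intros; auto.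
  f_equal. rewrite map_map. induction IH; simpl; auto. f_equal; auto.
Qed.

Lemma subst_id : forall t, subst (@Var F) t = t.
Proof.
  induction t as [x|f ts IH] using term_ind'; simpl; auto.
  f_equal. induction IH; simpl; auto. f_equal; auto.
Qed.

Lemma subst_eq_vars : forall t (a b : sub F), subst a t = subst b t ->
  forall x, In x (vars t) -> a x = b x.
Proof.
  induction t as [y|f ts IH] using term_ind'; simpl; intros a b H x Hx.
  - destruct Hx as [<-|[]]; auto.
  - injection H as H. induction IH; simpl in *. contradiction.
    injection H as H1 H2. apply in_app_or in Hx as [Hx|Hx]; eauto.
Qed.

Lemma vars_subst : forall t sg y, In y (vars (subst sg t)) ->
  exists x, In x (vars t) /\ In y (vars (sg x)).
Proof.
  induction t as [x|f ts IH] using term_ind'; simpl; intros sg y H.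
  - exists x; auto.
  - induction IH; simpl in *. contradiction.
    apply in_app_or in H as [H|H].
    + destruct (H0 _ _ H) as [z [? ?]]. exists z; split; auto. apply in_or_app; auto.
    + destruct (IHIH H) as [z [? ?]]. exists z; split; auto. apply in_or_app; auto.
Qed.

Fixpoint size t : nat := match t with
  | Var _ => 1
  | Fun _ ts => S (list_sum (map size ts)) end.

Lemma size_pos : forall t, 0 < size t.
Proof. destruct t; simpl; lia. Qed.

Lemma size_in : forall t ts, In t ts -> size t <= list_sum (map size ts).
Proof.
  induction ts; simpl; intros H. contradiction. destruct H; subst; try lia.
  specialize (IHts H); lia.
Qed.

Lemma size_var_subst : forall t sg x, In x (vars t) -> size (sg x) <= size (subst sg t).
Proof.
  induction t as [y|f ts IH] using term_ind'; simpl; intros sg x H.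
  - destruct H as [<-|[]]; auto.
  - induction IH; simpl in *. contradiction.
    apply in_app_or in H as [H|H].
    + specialize (H0 sg x H). lia.
    + specialize (IHIH H). lia.
Qed.

Lemma size_var_subst_lt : forall t sg x, In x (vars t) -> t <> Var x ->
  size (sg x) < size (subst sg t).
Proof.
  destruct t as [y|f ts]; simpl; intros sg x H Hn.
  - destruct H as [<-|[]]; congruence.
  - assert (size (sg x) <= list_sum (map size (map (subst sg) ts))); [|lia].
    clear Hn. induction ts; simpl in *. contradiction.
    apply in_app_or in H as [H|H].
    + pose proof (size_var_subst a sg x H). lia.
    + specialize (IHts H). lia.
Qed.

End S.

Definition put {A : Type} (i : nat) (ts : list A) (b : A) := firstn i ts ++ b :: skipn (S i) ts.

Lemma put_nth {A} : forall i (ts : list A) b j, i < length ts ->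
  nth_error (put i ts b) j = if j =? i then Some b else nth_error ts j.
Proof.
  unfold put; intros i ts b j Hi.
  assert (Hf : length (firstn i ts) = i) by (rewrite length_firstn; lia).
  destruct (lt_eq_lt_dec j i) as [[H|H]|H].
  - rewrite nth_error_app1 by lia. rewrite nth_error_firstn.
    replace (j =? i) with false by (symmetry; apply Nat.eqb_neq; lia).
    replace (j <? i) with true by (symmetry; apply Nat.ltb_lt; lia). auto.
  - subst. rewrite nth_error_app2 by lia. rewrite Hf, Nat.sub_diag, Nat.eqb_refl. auto.
  - rewrite nth_error_app2 by lia. rewrite Hf.
    replace (j =? i) with false by (symmetry; apply Nat.eqb_neq; lia).
    destruct (j - i) eqn:E; [lia|].
    transitivity (nth_error (skipn (S i) ts) n); [reflexivity|]. rewrite nth_error_skipn. f_equal. lia.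
Qed.

Lemma put_length {A} : forall i (ts : list A) b, i < length ts -> length (put i ts b) = length ts.
Proof.
  unfold put; intros. rewrite length_app. change (length (b :: ?l)) with (S (length l)). rewrite length_firstn, length_skipn. lia.
Qed.

Lemma nth_some_lt {A} : forall (ts : list A) i a, nth_error ts i = Some a -> i < length ts.
Proof. intros. apply nth_error_Some. congruence. Qed.

Lemma put_same {A} : forall i (ts : list A) b c, i < length ts ->
  put i (put i ts b) c = put i ts c.
Proof.
  intros. apply nth_error_ext; intro j.
  rewrite !put_nth; try rewrite put_length; auto. destruct (j =? i); auto.
Qed.

Lemma put_comm {A} : forall i j (ts : list A) b c, i < length ts -> j < length ts -> i <> j ->
  put i (put j ts c) b = put j (put i ts b) c.
Proof.
  intros. apply nth_error_ext; intro k.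
  rewrite !put_nth; try rewrite put_length; auto.
  destruct (k =? i) eqn:E1, (k =? j) eqn:E2; auto.
  apply Nat.eqb_eq in E1, E2. lia.
Qed.

Lemma put_self {A} : forall i (ts : list A) a, nth_error ts i = Some a -> put i ts a = ts.
Proof. intros. unfold put. apply firstn_skipn_middle; auto. Qed.

Lemma put_nth_same {A} : forall i (ts : list A) a b, nth_error ts i = Some a ->
  nth_error (put i ts b) i = Some b.
Proof. intros. rewrite put_nth. rewrite Nat.eqb_refl; auto. eapply nth_some_lt; eauto. Qed.

Lemma put_map {A B} (g : A -> B) : forall i ts b, map g (put i ts b) = put i (map g ts) (g b).
Proof. intros. unfold put. rewrite map_app. change (map g (b :: ?l)) with (g b :: map g l). rewrite firstn_map, skipn_map. auto. Qed.

Lemma put_cons0 {A} : forall (a b : A) l, put 0 (a :: l) b = b :: l.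
Proof. reflexivity. Qed.
Lemma put_consS {A} : forall i (a b : A) l, put (S i) (a :: l) b = a :: put i l b.
Proof. reflexivity. Qed.

Lemma put_app {A} : forall (xs : list A) a b ts, put (length xs) (xs ++ a :: ts) b = xs ++ b :: ts.
Proof. induction xs; simpl; intros; auto. rewrite put_consS. f_equal; auto. Qed.

Section P.
Context {F : Type}.
Implicit Types (t u s w x y : term F) (sg : sub F) (p q : pos).

Lemma replace_cons : forall f ts i q u,
  replace_at (Fun f ts) (i :: q) u =
  match nth_error ts i with
  | Some ti => match replace_at ti q u with Some ti' => Some (Fun f (put i ts ti')) | None => None end
  | None => None end.
Proof. reflexivity. Qed.

Lemma subt_at_subst : forall p t w sg, subt_at t p = Some w ->
  subt_at (subst sg t) p = Some (subst sg w).
Proof.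
  induction p as [|i p IH]; simpl; intros t w sg H. congruence.
  destruct t as [x|f ts]. discriminate.
  simpl. rewrite nth_error_map. destruct (nth_error ts i); try discriminate. simpl. auto.
Qed.

Lemma replace_at_subst : forall p t x y sg, replace_at t p x = Some y ->
  replace_at (subst sg t) p (subst sg x) = Some (subst sg y).
Proof.
  induction p as [|i p IH]; simpl; intros t x y sg H. congruence.
  destruct t as [z|f ts]. discriminate.
  simpl. rewrite nth_error_map. destruct (nth_error ts i) eqn:E; try discriminate. simpl.
  destruct (replace_at t p x) eqn:E2; try discriminate.
  rewrite (IH _ _ _ sg E2). injection H as <-.
  change (Some (Fun f (put i (map (subst sg) ts) (subst sg t0))) = Some (Fun f (map (subst sg) (put i ts t0)))).
  rewrite put_map. auto.
Qed.

Lemma replace_exists : forall p t w x, subt_at t p = Some w -> exists y, replace_at t p x = Some y.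
Proof.
  induction p as [|i p IH]; simpl; intros t w x H. eauto.
  destruct t as [z|f ts]. discriminate.
  destruct (nth_error ts i) eqn:E; try discriminate.
  destruct (IH _ _ x H) as [y Hy]. rewrite Hy. eauto.
Qed.

Lemma replace_subt : forall p t x y, replace_at t p x = Some y -> subt_at y p = Some x.
Proof.
  induction p as [|i p IH]; simpl; intros t x y H. congruence.
  destruct t as [z|f ts]. discriminate.
  destruct (nth_error ts i) eqn:E; try discriminate.
  destruct (replace_at t p x) eqn:E2; try discriminate. injection H as <-.
  change (subt_at (Fun f (put i ts t0)) (i :: p) = Some x). simpl. erewrite put_nth_same by eauto. eauto.
Qed.

Lemma replace_replace : forall p t x y z, replace_at t p x = Some y ->
  replace_at y p z = replace_at t p z.
Proof.
  induction p as [|i p IH]; simpl; intros t x y z H. auto.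
  destruct t as [v|f ts]. discriminate.
  destruct (nth_error ts i) eqn:E; try discriminate.
  destruct (replace_at t p x) eqn:E2; try discriminate. injection H as <-.
  change (replace_at (Fun f (put i ts t0)) (i :: p) z = match replace_at t p z with Some ti' => Some (Fun f (put i ts ti')) | None => None end).
  rewrite replace_cons. erewrite put_nth_same by eauto.
  rewrite (IH _ _ _ z E2). destruct (replace_at t p z); auto.
  rewrite put_same; auto. eapply nth_some_lt; eauto.
Qed.

Lemma replace_self : forall p t w, subt_at t p = Some w -> replace_at t p w = Some t.
Proof.
  induction p as [|i p IH]; simpl; intros t w H. congruence.
  destruct t as [v|f ts]. discriminate.
  destruct (nth_error ts i) eqn:E; try discriminate.
  rewrite (IH _ _ H). change (Some (Fun f (put i ts t)) = Some (Fun f ts)). rewrite put_self; auto.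
Qed.

Lemma subt_app : forall p q t, subt_at t (p ++ q) =
  match subt_at t p with Some w => subt_at w q | None => None end.
Proof.
  induction p as [|i p IH]; simpl; intros q t. auto.
  destruct t as [v|f ts]. auto.
  destruct (nth_error ts i); auto.
Qed.

Lemma replace_app : forall p q t w x w', subt_at t p = Some w -> replace_at w q x = Some w' ->
  replace_at t (p ++ q) x = replace_at t p w'.
Proof.
  induction p as [|i p IH]; simpl; intros q t w x w' H1 H2. congruence.
  destruct t as [v|f ts]. discriminate.
  destruct (nth_error ts i); try discriminate.
  rewrite (IH _ _ _ _ _ H1 H2). auto.
Qed.

Lemma size_subt : forall p t w, subt_at t p = Some w -> size w <= size t.
Proof.
  induction p as [|i p IH]; simpl; intros t w H. injection H as ->; auto.
  destruct t as [v|f ts]. discriminate.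
  destruct (nth_error ts i) eqn:E; try discriminate.
  apply IH in H. apply nth_error_In in E. apply size_in in E. simpl. lia.
Qed.

Lemma size_subt_lt : forall p t w, p <> [] -> subt_at t p = Some w -> size w < size t.
Proof.
  destruct p as [|i p]; simpl; intros t w Hp H. congruence.
  destruct t as [v|f ts]. discriminate.
  destruct (nth_error ts i) eqn:E; try discriminate.
  apply size_subt in H. apply nth_error_In in E. apply size_in in E. simpl. lia.
Qed.

Lemma subt_at_fun_nth : forall f ts i q w, subt_at (Fun f ts) (i :: q) = Some w ->
  exists a, nth_error ts i = Some a /\ subt_at a q = Some w.
Proof. simpl; intros. destruct (nth_error ts i); eauto; discriminate. Qed.

End P.

Section C.
Context {F : Type}.
Implicit Types (t u s w : term F) (sg : sub F) (p q : pos) (E : pairs F).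

Definition ctxc (Rel : term F -> term F -> Prop) :=
  forall f ts i a b, nth_error ts i = Some a -> Rel a b -> Rel (Fun f ts) (Fun f (put i ts b)).

Lemma rstep_root : forall E l r sg, E l r -> rstep E (subst sg l) (subst sg r).
Proof. intros. exists l, r, [], sg. simpl. auto. Qed.

Lemma rstep_ctx : forall E, ctxc (rstep E).
Proof.
  intros E f ts i a b Ha [l [r [p [sg [H1 [H2 H3]]]]]].
  exists l, r, (i :: p), sg. simpl. rewrite Ha. split; auto. split; auto. rewrite H3. auto.
Qed.

Lemma rstep_inv : forall E s t, rstep E s t ->
  (exists l r sg, E l r /\ s = subst sg l /\ t = subst sg r) \/
  (exists f ts i a a', s = Fun f ts /\ nth_error ts i = Some a /\ rstep E a a' /\ t = Fun f (put i ts a')).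
Proof.
  intros E s t [l [r [p [sg [H1 [H2 H3]]]]]]. destruct p as [|i p].
  - left. simpl in *. exists l, r, sg. split; auto. split; congruence.
  - right. destruct s as [z|f ts]. discriminate.
    simpl in H2, H3. destruct (nth_error ts i) eqn:E1; try discriminate.
    destruct (replace_at t0 p (subst sg r)) eqn:E2; try discriminate.
    exists f, ts, i, t0, t1. split; auto. split; auto. split.
    + exists l, r, p, sg. auto.
    + injection H3 as <-. reflexivity.
Qed.

Lemma rstep_subst : forall E s t d, rstep E s t -> rstep E (subst d s) (subst d t).
Proof.
  intros E s t d [l [r [p [sg [H1 [H2 H3]]]]]].
  exists l, r, p, (fun x => subst d (sg x)). split; auto.
  rewrite <- !subst_comp. split.
  - apply subt_at_subst; auto.
  - apply replace_at_subst; auto.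
Qed.

Lemma NF_subst : forall E w d, NF E (subst d w) -> NF E w.
Proof. intros E w d H [w' Hw]. apply H. exists (subst d w'). apply rstep_subst; auto. Qed.

Lemma ctxc_trans : forall Rel, ctxc Rel -> ctxc (clos_trans _ Rel).
Proof.
  intros Rel HR f ts i a b Ha H. revert ts Ha. induction H; intros ts Ha.
  - apply t_step. eapply HR; eauto.
  - eapply t_trans. apply IHclos_trans1; eauto.
    specialize (IHclos_trans2 (put i ts y)). rewrite put_same in IHclos_trans2.
    apply IHclos_trans2. eapply put_nth_same; eauto. eapply nth_some_lt; eauto.
Qed.

Lemma ctxc_rt : forall Rel, ctxc Rel -> ctxc (clos_refl_trans _ Rel).
Proof.
  intros Rel HR f ts i a b Ha H. revert ts Ha. induction H; intros ts Ha.
  - apply rt_step. eapply HR; eauto.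
  - rewrite put_self; auto. apply rt_refl.
  - eapply rt_trans. apply IHclos_refl_trans1; eauto.
    specialize (IHclos_refl_trans2 (put i ts y)). rewrite put_same in IHclos_refl_trans2.
    apply IHclos_refl_trans2. eapply put_nth_same; eauto. eapply nth_some_lt; eauto.
Qed.

Lemma ctxc_sym : forall E, ctxc (sym_step E).
Proof.
  intros E f ts i a b Ha [H|H].
  - left. apply rstep_ctx with a; auto.
  - right. pose proof (@rstep_ctx E f (put i ts b) i b a) as K.
    rewrite put_same in K. rewrite (@put_self _ i ts a Ha) in K. apply K; auto.
    eapply put_nth_same; eauto. eapply nth_some_lt; eauto.
Qed.

Lemma ctxc_joinable : forall E, ctxc (joinable E).
Proof.
  intros E f ts i a b Ha [v [H1 H2]].
  exists (Fun f (put i ts v)). split.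
  - eapply ctxc_rt; eauto. apply rstep_ctx.
  - pose proof (ctxc_rt (@rstep_ctx E) f (put i ts b) i (a:=b) (b:=v)) as K.
    rewrite put_same in K. apply K; auto. eapply put_nth_same; eauto. eapply nth_some_lt; eauto.
Qed.

Lemma ctxc_B_equiv : forall B, ctxc (B_equiv B).
Proof. intros. apply ctxc_rt. apply ctxc_sym. Qed.

Lemma ctxc_joinable_B : forall B E, ctxc (joinable_B B E).
Proof.
  intros B E f ts i a b Ha [t' [u' [H1 [H2 H3]]]].
  assert (Hl : i < length ts) by (eapply nth_some_lt; eauto).
  exists (Fun f (put i ts t')), (Fun f (put i ts u')). split; [|split].
  - eapply ctxc_rt; eauto. apply rstep_ctx.
  - pose proof (@ctxc_B_equiv B f (put i ts t') i t' u' ) as K.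
    rewrite put_same in K; auto. apply K; auto. eapply put_nth_same; eauto.
  - pose proof (ctxc_rt (@rstep_ctx E) f (put i ts b) i (a:=b) (b:=u')) as K.
    rewrite put_same in K; auto. apply K; auto. eapply put_nth_same; eauto.
Qed.

Lemma lift_pos : forall Rel, ctxc Rel -> forall p s a b sa sb,
  replace_at s p a = Some sa -> replace_at s p b = Some sb -> Rel a b -> Rel sa sb.
Proof.
  intros Rel HR p. induction p as [|i p IH]; simpl; intros s a b sa sb H1 H2 H.
  - congruence.
  - destruct s as [z|f ts]. discriminate.
    destruct (nth_error ts i) eqn:E1; try discriminate.
    destruct (replace_at t p a) eqn:E2; try discriminate.
    destruct (replace_at t p b) eqn:E3; try discriminate.
    injection H1 as <-. injection H2 as <-.
    pose proof (HR f (put i ts t0) i t0 t1) as K. rewrite put_same in K.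
    apply K. eapply put_nth_same; eauto. eapply IH; eauto. eapply nth_some_lt; eauto.
Qed.

Lemma forall2_rel : forall Rel, (forall a, Rel a a) -> (forall a b c, Rel a b -> Rel b c -> Rel a c) ->
  ctxc Rel -> forall f ts us, Forall2 Rel ts us -> Rel (Fun f ts) (Fun f us).
Proof.
  intros Rel Hr Ht Hc f ts us H.
  assert (forall xs, Rel (Fun f (xs ++ ts)) (Fun f (xs ++ us))) as K; [|apply (K [])].
  induction H; intros xs. apply Hr.
  apply Ht with (Fun f (xs ++ y :: l)).
  - rewrite <- put_app with (b := y) (a := x). unfold ctxc in Hc. apply Hc with x; auto.
    rewrite nth_error_app2 by lia. rewrite Nat.sub_diag. auto.
  - specialize (IHForall2 (xs ++ [y])). rewrite <- !app_assoc in IHForall2. apply IHForall2.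
Qed.

Lemma subst_rel : forall Rel, (forall a, Rel a a) -> (forall a b c, Rel a b -> Rel b c -> Rel a c) ->
  ctxc Rel -> forall c (a b : sub F), (forall z, In z (vars c) -> Rel (a z) (b z)) ->
  Rel (subst a c) (subst b c).
Proof.
  intros Rel Hr Ht Hc c. induction c as [z|f ts IH] using term_ind'; simpl; intros a b H.
  - apply H; auto.
  - apply forall2_rel; auto. induction IH; simpl in *; constructor.
    + apply H0. intros. apply H. apply in_or_app; auto.
    + apply IHIH. intros. apply H. apply in_or_app; auto.
Qed.

End C.

Section D.
Context {F : Type}.
Implicit Types (t u s w : term F) (sg : sub F).

Definition eqs := list (term F * term F).
Definition unif (sg : sub F) (E : eqs) := Forall (fun e => subst sg (fst e) = subst sg (snd e)) E.
Definition MG (E : eqs) := exists sg, unif sg E /\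
  forall th, unif th E -> exists d, forall x, th x = subst d (sg x).
Definition evars (E : eqs) := flat_map (fun e => vars (fst e) ++ vars (snd e)) E.
Definition nv (E : eqs) := length (nodup Nat.eq_dec (evars E)).
Definition esz (E : eqs) := list_sum (map (fun e => size (fst e) + size (snd e)) E).

Lemma term_eq_var : forall (t : term F) x, {t = Var x} + {t <> Var x}.
Proof.
  intros [y|f ts] x. destruct (Nat.eq_dec y x); [left; congruence|right; congruence].
  right; discriminate.
Qed.

Lemma nv_le : forall E1 E2, incl (evars E1) (evars E2) -> nv E1 <= nv E2.
Proof.
  intros. unfold nv. apply NoDup_incl_length. apply NoDup_nodup.
  intros y Hy. apply nodup_In in Hy. apply nodup_In. auto.
Qed.

Lemma nv_lt : forall E1 E2 x, incl (evars E1) (evars E2) -> In x (evars E2) -> ~ In x (evars E1) ->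
  nv E1 < nv E2.
Proof.
  intros. unfold nv. unfold lt.
  change (S (length (nodup Nat.eq_dec (evars E1)))) with (length (x :: nodup Nat.eq_dec (evars E1))).
  apply NoDup_incl_length.
  - constructor. rewrite nodup_In; auto. apply NoDup_nodup.
  - intros y [<-|Hy]; apply nodup_In; auto. apply nodup_In in Hy. auto.
Qed.

Lemma MG_equiv : forall E1 E2, (forall sg, unif sg E1 <-> unif sg E2) -> MG E1 -> MG E2.
Proof.
  intros E1 E2 H [sg [H1 H2]]. exists sg. split. apply H; auto.
  intros th Hth. apply H2. apply H; auto.
Qed.

Lemma unif_cons : forall sg a b E, unif sg ((a,b)::E) <-> subst sg a = subst sg b /\ unif sg E.
Proof. intros. unfold unif. split; intro H. inversion H; auto. destruct H; constructor; auto. Qed.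

Lemma evars_cons : forall a b E, evars ((a,b)::E) = vars a ++ vars b ++ evars E.
Proof. intros. unfold evars. simpl. rewrite app_assoc. auto. Qed.

Lemma elim_case : forall x b E, b <> Var x ->
  (forall E', nv E' < nv ((Var x, b) :: E) -> (exists tau, unif tau E') -> MG E') ->
  (exists tau, unif tau ((Var x, b) :: E)) -> MG ((Var x, b) :: E).
Proof.
  intros x b E Hb IH [tau Htau].
  apply unif_cons in Htau as [Htx HtE]. simpl in Htx.
  destruct (in_dec Nat.eq_dec x (vars b)) as [Hin|Hin].
  { exfalso. pose proof (size_var_subst_lt tau Hin Hb). rewrite Htx in H. lia. }
  set (rho := fun y => if Nat.eqb y x then b else Var y).
  assert (Hrb : subst rho b = b).
  { rewrite <- (subst_id b) at 2. apply subst_ext_in. intros y Hy. unfold rho.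
    destruct (Nat.eqb_spec y x); subst; auto. contradiction. }
  assert (Hfix : forall th, th x = subst th b -> forall y, subst th (rho y) = th y).
  { intros th Hth y. unfold rho. destruct (Nat.eqb_spec y x); subst; auto. }
  assert (Hfix2 : forall th, th x = subst th b -> forall t, subst th (subst rho t) = subst th t).
  { intros. rewrite subst_comp. apply subst_ext. apply Hfix; auto. }
  set (E2 := map (fun e => (subst rho (fst e), subst rho (snd e))) E).
  assert (HE2 : forall th, th x = subst th b -> (unif th E2 <-> unif th E)).
  { intros th Hth. unfold unif, E2. rewrite Forall_map. simpl.
    split; apply Forall_impl; intros [c d]; simpl; rewrite !Hfix2; auto. }
  assert (Hv : forall t y, In y (vars (subst rho t)) -> y <> x /\ (In y (vars t) \/ In y (vars b))).
  { intros t y Hy. apply vars_subst in Hy as [z [Hz Hy]]. unfold rho in Hy.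
    destruct (Nat.eqb_spec z x).
    - split; auto. intro; subst; contradiction.
    - simpl in Hy. destruct Hy as [<-|[]]; auto. }
  assert (Hlt : nv E2 < nv ((Var x, b) :: E)).
  { apply nv_lt with x.
    - intros y Hy. unfold E2, evars in Hy. rewrite flat_map_concat_map, map_map in Hy.
      apply in_concat in Hy as [l [Hl Hy]]. apply in_map_iff in Hl as [[c d] [<- Hcd]]. simpl in Hy.
      rewrite evars_cons. simpl. right. apply in_or_app.
      apply in_app_or in Hy as [Hy|Hy]; apply Hv in Hy as [_ [Hy|Hy]]; auto; right;
      unfold evars; apply in_flat_map; exists (c,d); split; auto; simpl; apply in_or_app; auto.
    - rewrite evars_cons. simpl; auto.
    - intro Hy. unfold E2, evars in Hy. rewrite flat_map_concat_map, map_map in Hy.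
      apply in_concat in Hy as [l [Hl Hy]]. apply in_map_iff in Hl as [[c d] [<- Hcd]]. simpl in Hy.
      apply in_app_or in Hy as [Hy|Hy]; apply Hv in Hy as [Hy _]; auto. }
  destruct (IH E2 Hlt) as [sg' [Hs1 Hs2]].
  { exists tau. apply HE2; auto. }
  exists (fun y => subst sg' (rho y)). split.
  - apply unif_cons. split.
    + simpl. unfold rho at 1. rewrite Nat.eqb_refl. rewrite <- subst_comp. rewrite Hrb. auto.
    + unfold unif in *. unfold E2 in Hs1. rewrite Forall_map in Hs1.
      eapply Forall_impl; [|exact Hs1]. intros [c d]; simpl. rewrite <- !subst_comp. auto.
  - intros th Hth. apply unif_cons in Hth as [Hthx HthE]. simpl in Hthx.
    destruct (Hs2 th) as [d Hd]. apply HE2; auto.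
    exists d. intros y. rewrite <- (Hfix th Hthx y). rewrite subst_comp.
    apply subst_ext. auto.
Qed.

Lemma unif_combine : forall sg ts us, length ts = length us ->
  (unif sg (combine ts us) <-> map (subst sg) ts = map (subst sg) us).
Proof.
  induction ts; destruct us; simpl; intros H; try discriminate.
  - split; auto. intros; constructor.
  - injection H as H. change (combine ts us) with (combine ts us).
    change (unif sg ((a, t) :: combine ts us) <-> subst sg a :: map (subst sg) ts = subst sg t :: map (subst sg) us).
    rewrite unif_cons. rewrite IHts; auto. split.
    + intros [-> ->]; auto.
    + intros K; injection K; auto.
Qed.

Lemma esz_combine : forall ts us, length ts = length us ->
  esz (combine ts us) = list_sum (map size ts) + list_sum (map size us).
Proof.
  induction ts; destruct us; simpl; intros H; try discriminate; auto.
  injection H as H. unfold esz in *. simpl. rewrite IHts; auto. lia.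
Qed.

Lemma evars_combine : forall ts us y, In y (evars (combine ts us)) ->
  In y (flat_map (@vars F) ts) \/ In y (flat_map (@vars F) us).
Proof.
  induction ts; destruct us; simpl; intros y H; auto.
  change (evars ((a,t) :: combine ts us)) with (vars a ++ vars t ++ evars (combine ts us)) in H.
  rewrite !in_app_iff in *.
  destruct H as [[H|H]|H]; auto. apply IHts in H as [H|H]; auto.
Qed.

Lemma MG_all : forall n sz E, nv E <= n -> esz E <= sz -> (exists tau, unif tau E) -> MG E.
Proof.
  intro n. induction n as [n IHn] using lt_wf_ind.
  intro sz. induction sz as [sz IHs] using lt_wf_ind.
  intros E Hn Hs Hu. destruct E as [|[a b] E].
  { exists (@Var F). split. constructor. intros th _. exists th. auto. }
  assert (Helim : forall x c, c <> Var x -> (exists tau, unif tau ((Var x, c) :: E)) ->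
            nv ((Var x, c) :: E) <= n -> MG ((Var x, c) :: E)).
  { intros x c Hc Hu' Hn'. apply elim_case; auto. intros E' HE' Hu''.
    apply (IHn (nv E')) with (sz := esz E'); auto. lia. }
  destruct a as [x|f ts].
  - destruct (term_eq_var b x) as [->|Hb].
    + apply MG_equiv with E.
      { intros sg. rewrite unif_cons. intuition. }
      apply (IHs (esz E)).
      * unfold esz in *. simpl in Hs. lia.
      * etransitivity; [|exact Hn]. apply nv_le.
        rewrite evars_cons. intros y Hy. simpl. auto.
      * auto.
      * destruct Hu as [tau Hu]. apply unif_cons in Hu. exists tau; tauto.
    + apply Helim; auto.
  - destruct b as [y|g us].
    + apply MG_equiv with ((Var y, Fun f ts) :: E).
      { intros sg. rewrite !unif_cons. intuition. }
      apply Helim. discriminate.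
      * destruct Hu as [tau Hu]. exists tau. rewrite unif_cons in *. intuition.
      * etransitivity; [|exact Hn]. apply nv_le. rewrite !evars_cons. intros z Hz.
        rewrite !in_app_iff in *. tauto.
    + destruct Hu as [tau Hu]. pose proof Hu as Hu0. apply unif_cons in Hu as [Hfu HE].
      simpl in Hfu. injection Hfu as <- Hm.
      assert (Hlen : length ts = length us).
      { rewrite <- (length_map (subst tau) ts), <- (length_map (subst tau) us). congruence. }
      apply MG_equiv with (combine ts us ++ E).
      { intros sg. unfold unif at 1. rewrite Forall_app. fold (unif sg (combine ts us)).
        rewrite unif_combine; auto. rewrite unif_cons. simpl. split.
        - intros [H1 H2]. split; auto. rewrite H1. auto.
        - intros [H1 H2]. injection H1; auto. }
      apply (IHs (esz (combine ts us ++ E))).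
      * unfold esz at 1. rewrite map_app, list_sum_app. fold (esz (combine ts us)).
        rewrite esz_combine; auto. unfold esz in *. simpl in Hs. lia.
      * etransitivity; [|exact Hn]. apply nv_le. rewrite evars_cons. intros z Hz.
        unfold evars in Hz. rewrite flat_map_app in Hz. apply in_app_or in Hz as [Hz|Hz].
        -- apply evars_combine in Hz. simpl. rewrite !in_app_iff. tauto.
        -- rewrite !in_app_iff. auto.
      * lia.
      * exists tau. unfold unif. rewrite Forall_app. split; auto.
        fold (unif tau (combine ts us)). apply unif_combine; auto.
Qed.

Lemma mgu_exists : forall (tau : sub F) a b, subst tau a = subst tau b -> exists sg, mgu sg a b.
Proof.
  intros tau a b H.
  destruct (MG_all (n := nv [(a,b)]) (sz := esz [(a,b)]) (E := [(a,b)])) as [sg [H1 H2]]; auto.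
  - exists tau. apply unif_cons. split; auto. constructor.
  - exists sg. split.
    + apply unif_cons in H1. apply H1.
    + intros th Hth. apply H2. apply unif_cons. split; auto. constructor.
Qed.

End D.

Section E.
Context {F : Type}.
Implicit Types (t u s w : term F) (sg : sub F) (p q : pos).

Definition prime (R : pairs F) (z : term F) :=
  forall q z', q <> [] -> subt_at z q = Some z' -> NF R z'.

Definition upd (sg : sub F) x y : sub F := fun z => if Nat.eqb z x then y else sg z.

Lemma subt_var_in : forall p (l : term F) x, subt_at l p = Some (Var x) -> In x (vars l).
Proof.
  induction p as [|i p IH]; simpl; intros l x H.
  - injection H as ->. simpl; auto.
  - destruct l as [z|f ts]. discriminate.
    destruct (nth_error ts i) eqn:Ei; try discriminate. simpl.
    apply in_flat_map. exists t. split; eauto. eapply nth_error_In; eauto.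
Qed.

Lemma pos_split : forall c sg p w, subt_at (subst sg c) p = Some w ->
  (exists p1 p2 x, p = p1 ++ p2 /\ subt_at c p1 = Some (Var x) /\ subt_at (sg x) p2 = Some w) \/
  (exists f ts, subt_at c p = Some (Fun f ts)).
Proof.
  induction c as [x|f ts IH] using term_ind'; intros sg p w H.
  - left. exists [], p, x. simpl. auto.
  - destruct p as [|i p].
    + right. simpl. eauto.
    + simpl in H. rewrite nth_error_map in H.
      destruct (nth_error ts i) eqn:Ei; try discriminate. simpl in H.
      pose proof (nth_error_In _ _ Ei) as Hin. rewrite Forall_forall in IH.
      destruct (IH _ Hin _ _ _ H) as [[p1 [p2 [x [-> [H1 H2]]]]]|[g [us Hg]]].
      * left. exists (i :: p1), p2, x. simpl. rewrite Ei. auto.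
      * right. exists g, us. simpl. rewrite Ei. auto.
Qed.

Lemma Forall2_nth {A} (Rel : A -> A -> Prop) : forall l l', length l = length l' ->
  (forall n a b, nth_error l n = Some a -> nth_error l' n = Some b -> Rel a b) -> Forall2 Rel l l'.
Proof.
  induction l; destruct l'; simpl; intros H1 H2; try discriminate; constructor.
  - apply (H2 0); auto.
  - apply IHl; auto. intros n. apply (H2 (S n)).
Qed.

Lemma var_case_rel : forall Rel, (forall a, Rel a a) -> (forall a b c, Rel a b -> Rel b c -> Rel a c) ->
  ctxc Rel -> forall p1 l x sg y t, subt_at l p1 = Some (Var x) ->
  replace_at (subst sg l) p1 y = Some t -> Rel (sg x) y -> Rel t (subst (upd sg x y) l).
Proof.
  intros Rel Hr Ht Hc p1. induction p1 as [|i q IH]; intros l x sg y t H1 H2 H3.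
  - simpl in *. injection H1 as ->. injection H2 as <-. simpl. unfold upd. rewrite Nat.eqb_refl. auto.
  - destruct l as [z|f ts]. discriminate.
    simpl in H1. destruct (nth_error ts i) eqn:Ei; try discriminate.
    change (subst sg (Fun f ts)) with (Fun f (map (subst sg) ts)) in H2.
    rewrite replace_cons in H2. rewrite nth_error_map, Ei in H2. simpl in H2.
    destruct (replace_at (subst sg t0) q y) eqn:E2; try discriminate. injection H2 as <-.
    simpl. apply forall2_rel; auto.
    assert (Hl : i < length ts) by (eapply nth_some_lt; eauto).
    apply Forall2_nth.
    + rewrite put_length, !length_map; auto. rewrite length_map; auto.
    + intros n a b Ha Hb. rewrite put_nth in Ha by (rewrite length_map; auto).
      rewrite nth_error_map in Hb.
      destruct (Nat.eqb_spec n i).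
      * subst. injection Ha as <-. rewrite Ei in Hb. injection Hb as <-. eapply IH; eauto.
      * rewrite nth_error_map in Ha. destruct (nth_error ts n); try discriminate.
        injection Ha as <-. injection Hb as <-. apply subst_rel; auto.
        intros z _. unfold upd. destruct (Nat.eqb_spec z x); subst; auto.
Qed.

Lemma NoDup_app_disj {A} : forall (l1 l2 : list A) x, NoDup (l1 ++ l2) -> In x l1 -> ~ In x l2.
Proof.
  induction l1; simpl; intros l2 x H Hx. contradiction.
  inversion H; subst. destruct Hx as [<-|Hx].
  - intro. apply H2. apply in_or_app; auto.
  - eapply IHl1; eauto.
Qed.

Lemma NoDup_flat_in : forall (ts : list (term F)) i j a b x, NoDup (flat_map (@vars F) ts) ->
  nth_error ts i = Some a -> nth_error ts j = Some b -> i <> j -> In x (vars a) -> ~ In x (vars b).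
Proof.
  induction ts as [|c ts IH]; intros i j a b x H Ha Hb Hij Hx.
  - destruct i; discriminate.
  - simpl in H. destruct i, j; simpl in Ha, Hb; try lia.
    + injection Ha as ->. intro Hb'. apply (NoDup_app_disj _ _ _ H Hx).
      apply in_flat_map. exists b. split; auto. eapply nth_error_In; eauto.
    + injection Hb as ->. intro Hb'. apply (NoDup_app_disj _ _ _ H Hb').
      apply in_flat_map. exists a. split; auto. eapply nth_error_In; eauto.
    + apply NoDup_app_remove_l in H. eapply IH with (i:=i) (j:=j); eauto.
Qed.

Lemma NoDup_flat_nth : forall (ts : list (term F)) i a, NoDup (flat_map (@vars F) ts) ->
  nth_error ts i = Some a -> NoDup (vars a).
Proof.
  induction ts as [|c ts IH]; intros i a H Ha. destruct i; discriminate.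
  simpl in H. destruct i; simpl in Ha.
  - injection Ha as ->. eapply NoDup_app_remove_r; eauto.
  - apply NoDup_app_remove_l in H. eauto.
Qed.

Lemma var_case_lin : forall p1 l x sg y t, NoDup (vars l) -> subt_at l p1 = Some (Var x) ->
  replace_at (subst sg l) p1 y = Some t -> t = subst (upd sg x y) l.
Proof.
  intros p1. induction p1 as [|i q IH]; intros l x sg y t Hnd H1 H2.
  - simpl in *. injection H1 as ->. injection H2 as <-. simpl. unfold upd. rewrite Nat.eqb_refl. auto.
  - destruct l as [z|f ts]. discriminate.
    simpl in H1. destruct (nth_error ts i) eqn:Ei; try discriminate.
    change (subst sg (Fun f ts)) with (Fun f (map (subst sg) ts)) in H2.
    rewrite replace_cons in H2. rewrite nth_error_map, Ei in H2. simpl in H2.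
    destruct (replace_at (subst sg t0) q y) eqn:E2; try discriminate. injection H2 as <-.
    simpl. f_equal. simpl in Hnd.
    assert (Hl : i < length ts) by (eapply nth_some_lt; eauto).
    apply nth_error_ext. intros n. rewrite put_nth by (rewrite length_map; auto).
    rewrite !nth_error_map. destruct (Nat.eqb_spec n i).
    + subst. rewrite Ei. simpl. f_equal. eapply IH; eauto. eapply NoDup_flat_nth; eauto.
    + destruct (nth_error ts n) eqn:En; auto. simpl. f_equal. apply subst_ext_in.
      intros z Hz. unfold upd. destruct (Nat.eqb_spec z x); auto. subst.
      exfalso. eapply NoDup_flat_in with (i:=i) (j:=n); eauto.
      eapply subt_var_in; eauto.
Qed.

End E.

Section G.
Context {F : Type}.
Implicit Types (t u s w : term F) (sg : sub F) (p q : pos).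

Lemma innermost : forall (R : pairs F) w, (exists w', rstep R w w') ->
  exists q l r sg, subt_at w q = Some (subst sg l) /\ R l r /\ prime R (subst sg l).
Proof.
  intros R w. remember (size w) as n. revert w Heqn.
  induction n as [n IH] using lt_wf_ind. intros w Hn [w' [l [r [p [sg [H1 [H2 H3]]]]]]].
  destruct (classic (prime R (subst sg l))) as [Hp|Hp].
  - exists p, l, r, sg. auto.
  - unfold prime in Hp.
    apply not_all_ex_not in Hp as [q Hp]. apply not_all_ex_not in Hp as [z Hp].
    apply imply_to_and in Hp as [Hq Hp]. apply imply_to_and in Hp as [Hz Hnf].
    unfold NF in Hnf. apply NNPP in Hnf.
    assert (Hs : size z < n).
    { subst n. pose proof (size_subt_lt _ Hq Hz). pose proof (size_subt _ _ H2). lia. }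
    destruct (IH _ Hs z eq_refl Hnf) as [q' [l' [r' [sg' [K1 [K2 K3]]]]]].
    exists (p ++ q ++ q'), l', r', sg'. split; auto.
    rewrite subt_app, H2, subt_app, Hz. auto.
Qed.

Lemma list_max_in : forall l z, In z l -> z <= list_max l.
Proof.
  intros l z H. pose proof (list_max_le l (list_max l)) as [K _].
  specialize (K (le_n _)). rewrite Forall_forall in K. auto.
Qed.

Lemma crit : forall (R E1 E2 : pairs F) l1' r1' l2' r2' sg1 sg2 p f ts t,
  E1 l1' r1' -> E2 l2' r2' -> incl (vars r2') (vars l2') ->
  subt_at l2' p = Some (Fun f ts) ->
  subt_at (subst sg2 l2') p = Some (subst sg1 l1') ->
  replace_at (subst sg2 l2') p (subst sg1 r1') = Some t ->
  prime R (subst sg1 l1') ->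
  t = subst sg2 r2' \/ rstep (prime_cp R E1 E2) t (subst sg2 r2').
Proof.
  intros R E1 E2 l1' r1' l2' r2' sg1 sg2 p f ts t HE1 HE2 Hincl Hp Hs Ht Hprime.
  set (N := S (list_max (vars l1' ++ vars r1' ++ vars l2' ++ vars r2'))).
  assert (HN1 : forall z, In z (vars l1') -> z < N).
  { intros. unfold N. pose proof (@list_max_in (vars l1' ++ vars r1' ++ vars l2' ++ vars r2') z). 
    rewrite !in_app_iff in H0. specialize (H0 ltac:(auto)). lia. }
  assert (HN2 : forall z, In z (vars r1') -> z < N).
  { intros. unfold N. pose proof (@list_max_in (vars l1' ++ vars r1' ++ vars l2' ++ vars r2') z). 
    rewrite !in_app_iff in H0. specialize (H0 ltac:(auto)). lia. }
  assert (HN3 : forall z, In z (vars l2') -> z < N).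
  { intros. unfold N. pose proof (@list_max_in (vars l1' ++ vars r1' ++ vars l2' ++ vars r2') z). 
    rewrite !in_app_iff in H0. specialize (H0 ltac:(auto)). lia. }
  assert (HN4 : forall z, In z (vars r2') -> z < N).
  { intros. unfold N. pose proof (@list_max_in (vars l1' ++ vars r1' ++ vars l2' ++ vars r2') z). 
    rewrite !in_app_iff in H0. specialize (H0 ltac:(auto)). lia. }
  clearbody N.
  set (pi := fun z => if z <? N then z + N else if z <? N + N then z - N else z).
  assert (Hpi : forall z, pi (pi z) = z).
  { intros z. unfold pi. destruct (Nat.ltb_spec z N).
    - destruct (Nat.ltb_spec (z + N) N); [lia|]. destruct (Nat.ltb_spec (z + N) (N + N)); lia.
    - destruct (Nat.ltb_spec z (N + N)).
      + destruct (Nat.ltb_spec (z - N) N); lia.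
      + destruct (Nat.ltb_spec z N); [lia|]. destruct (Nat.ltb_spec z (N+N)); lia. }
  assert (Hpi1 : forall z, z < N -> pi z = z + N).
  { intros z Hz. unfold pi. destruct (Nat.ltb_spec z N); lia. }
  set (l1 := subst (@renaming F pi) l1'). set (r1 := subst (@renaming F pi) r1').
  set (tau := fun z => if z <? N then sg2 z else sg1 (pi z)).
  assert (Hren : forall c, (forall z, In z (vars c) -> z < N) -> subst tau (subst (@renaming F pi) c) = subst sg1 c).
  { intros c Hc. rewrite subst_comp. apply subst_ext_in. intros z Hz. simpl. unfold tau.
    rewrite Hpi1 by auto. destruct (Nat.ltb_spec (z + N) N); [lia|]. rewrite <- Hpi1 by auto.
    rewrite Hpi. auto. }
  assert (Hor : forall c, (forall z, In z (vars c) -> z < N) -> subst tau c = subst sg2 c).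
  { intros c Hc. apply subst_ext_in. intros z Hz. unfold tau. specialize (Hc z Hz).
    destruct (Nat.ltb_spec z N); [auto|lia]. }
  assert (Hl1 : subst tau l1 = subst sg1 l1') by (apply Hren; auto).
  assert (Hr1 : subst tau r1 = subst sg1 r1') by (apply Hren; auto).
  assert (Hl2 : subst tau l2' = subst sg2 l2') by (apply Hor; auto).
  assert (Hr2 : subst tau r2' = subst sg2 r2') by (apply Hor; auto).
  assert (Hunif : subst tau l1 = subst tau (Fun f ts)).
  { pose proof (subt_at_subst _ _ tau Hp) as K. rewrite Hl2, Hs in K. rewrite Hl1. congruence. }
  destruct (mgu_exists _ _ _ Hunif) as [sg [Hsg1 Hsg2]].
  destruct (Hsg2 tau Hunif) as [d Hd].
  assert (Hcomp : forall c, subst tau c = subst d (subst sg c)).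
  { intros c. rewrite subst_comp. apply subst_ext. auto. }
  pose proof (subt_at_subst _ _ sg Hp) as Hsp.
  destruct (replace_exists _ _ (subst sg r1) Hsp) as [cpt Hcpt].
  assert (Htc : t = subst d cpt).
  { pose proof (replace_at_subst _ _ _ d Hcpt) as K. rewrite <- !Hcomp, Hl2, Hr1 in K. congruence. }
  destruct (classic (p = [] /\ variant l1 r1 l2' r2')) as [[-> [pi' [_ [Ev1 Ev2]]]]|Hnv].
  - left. simpl in Ht. injection Ht as <-. simpl in Hp. injection Hp as Hp.
    rewrite <- Hr1, <- Hr2. rewrite Ev2. rewrite subst_comp.
    apply subst_ext_in. intros z Hz. simpl.
    rewrite <- Hp in Hunif. rewrite Ev1, subst_comp in Hunif. simpl in Hunif.
    apply (subst_eq_vars _ _ _ Hunif). auto.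
  - right. exists cpt, (subst sg r2'), [], d. split; [|split].
    + exists l1, r1, l2', r2', l1', r1', l2', r2', p, sg, (Fun f ts).
      split; auto. split.
      { exists pi. split. exists pi. auto. auto. }
      split; auto. split.
      { exists (fun z => z). split. exists (fun z => z). auto.
        unfold renaming. rewrite !subst_id. auto. }
      split.
      { intros z Hz Hz2. apply in_app_or in Hz. 
        assert (Hz1 : exists y, In y (vars l1') /\ z = pi y \/ In y (vars r1') /\ z = pi y).
        { destruct Hz as [Hz|Hz]; apply vars_subst in Hz as [y [Hy Hzy]]; simpl in Hzy;
          destruct Hzy as [<-|[]]; eauto. }
        destruct Hz1 as [y [[Hy ->]|[Hy ->]]]; rewrite Hpi1 in Hz2 by auto;
        apply in_app_or in Hz2 as [Hz2|Hz2];
        first [apply HN3 in Hz2 | apply HN4 in Hz2]; lia. }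
      split; auto. split; eauto. split.
      { split; auto. }
      split.
      { intros -> Hv. apply Hnv. auto. }
      split; auto. split; auto.
      intros sp Hsp' q w Hq Hw. rewrite Hsp in Hsp'. injection Hsp' as <-.
      apply NF_subst with d. apply (Hprime q); auto.
      pose proof (subt_at_subst _ _ d Hw) as K.
      rewrite <- Hl1, Hunif, Hcomp. exact K.
    + simpl. congruence.
    + simpl. f_equal. rewrite <- Hcomp. auto.
Qed.

End G.

Section H.
Context {F : Type}.
Implicit Types (t u s w : term F) (sg : sub F) (p q : pos).

Lemma rev_pos : forall (a b : term F) q (x y : term F), subt_at a q = Some x -> replace_at a q y = Some b ->
  subt_at b q = Some y /\ replace_at b q x = Some a.
Proof.
  intros. split. eapply replace_subt; eauto.
  rewrite (replace_replace _ _ _ _ H0). apply replace_self; auto.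
Qed.

Lemma sym_to_Bpm : forall (B : pairs F) s u, sym_step B s u -> rstep (Bpm B) s u.
Proof.
  intros B s u [[l [r [q [sg [H1 [H2 H3]]]]]]|[l [r [q [sg [H1 [H2 H3]]]]]]].
  - exists l, r, q, sg. unfold Bpm. auto.
  - destruct (@rev_pos u s q _ _ H2 H3) as [K1 K2]. exists r, l, q, sg. unfold Bpm. auto.
Qed.

Lemma Bpm_to_sym : forall (B : pairs F) s u, rstep (Bpm B) s u -> sym_step B s u.
Proof.
  intros B s u [l [r [q [sg [[H1|H1] [H2 H3]]]]]].
  - left. exists l, r, q, sg. auto.
  - destruct (@rev_pos s u q _ _ H2 H3) as [K1 K2]. right. exists r, l, q, sg. auto.
Qed.

Lemma Bpm_equiv : forall (B : pairs F) s u, rstep (Bpm B) s u -> B_equiv B s u.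
Proof. intros. apply rt_step. apply Bpm_to_sym. auto. Qed.

Lemma B_equiv_refl : forall (B : pairs F) a, B_equiv B a a.
Proof. intros. apply rt_refl. Qed.
Lemma B_equiv_trans : forall (B : pairs F) a b c, B_equiv B a b -> B_equiv B b c -> B_equiv B a c.
Proof. intros. eapply rt_trans; eauto. Qed.

Lemma rt_refl' : forall E a, clos_refl_trans (term F) (rstep E) a a.
Proof. intros. apply rt_refl. Qed.
Lemma rt_trans' : forall E a b c, clos_refl_trans (term F) (rstep E) a b ->
  clos_refl_trans (term F) (rstep E) b c -> clos_refl_trans (term F) (rstep E) a c.
Proof. intros. eapply rt_trans; eauto. Qed.

Lemma upd_rel : forall (Rel : term F -> term F -> Prop), (forall a, Rel a a) ->
  forall sg x y, Rel (sg x) y -> forall z, Rel (sg z) (upd sg x y z).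
Proof. intros. unfold upd. destruct (Nat.eqb_spec z x); subst; auto. Qed.

Lemma step_at : forall E l r sg s p v, E l r -> subt_at s p = Some (subst sg l) ->
  replace_at s p (subst sg r) = Some v -> rstep E s v.
Proof. intros. exists l, r, p, sg. auto. Qed.

Lemma subst_rt : forall E c (a b : sub F),
  (forall z, In z (vars c) -> clos_refl_trans _ (rstep E) (a z) (b z)) ->
  clos_refl_trans _ (rstep E) (subst a c) (subst b c).
Proof.
  intros. apply subst_rel; auto. apply rt_refl'. apply rt_trans'. apply ctxc_rt. apply rstep_ctx.
Qed.

Lemma subst_Beq : forall B c (a b : sub F),
  (forall z, In z (vars c) -> B_equiv B (a z) (b z)) -> B_equiv B (subst a c) (subst b c).
Proof.
  intros. apply subst_rel; auto. apply B_equiv_refl. apply B_equiv_trans. apply ctxc_B_equiv.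
Qed.

Lemma var_data : forall (l2 : term F) sg2 p p1 p2 x (w z : term F),
  p = p1 ++ p2 -> subt_at l2 p1 = Some (Var x) -> subt_at (sg2 x) p2 = Some w ->
  exists y, replace_at (sg2 x) p2 z = Some y /\
            replace_at (subst sg2 l2) p1 y = replace_at (subst sg2 l2) p z.
Proof.
  intros. destruct (replace_exists _ _ z H1) as [y Hy]. exists y. split; auto.
  subst p. symmetry. eapply replace_app; eauto.
  apply (subt_at_subst _ _ sg2) in H0. exact H0.
Qed.

Lemma RR_root : forall (R : pairs F), TRS R -> left_linear R ->
  forall l2 r2 sg2 l1 r1 sg1 p t, R l2 r2 -> R l1 r1 ->
  subt_at (subst sg2 l2) p = Some (subst sg1 l1) ->
  replace_at (subst sg2 l2) p (subst sg1 r1) = Some t -> prime R (subst sg1 l1) ->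
  joinable R t (subst sg2 r2) \/ sym_step (PCP R) t (subst sg2 r2).
Proof.
  intros R HT HL l2 r2 sg2 l1 r1 sg1 p t H2 H1 Hs Ht Hp.
  destruct (pos_split _ _ _ Hs) as [[p1 [p2 [x [Hpp [K1 K2]]]]]|[f [ts Hf]]].
  - left. destruct (@var_data l2 sg2 p p1 p2 x _ (subst sg1 r1) Hpp K1 K2) as [y [Hy Hy2]].
    rewrite Ht in Hy2. pose proof (var_case_lin _ _ _ _ (HL _ _ H2) K1 Hy2) as ->.
    exists (subst (upd sg2 x y) r2). split.
    + apply rt_step. apply rstep_root. auto.
    + apply subst_rt.
      intros z _. apply upd_rel. apply rt_refl'. apply rt_step. eapply step_at; eauto.
  - destruct (crit (R:=R) R R _ _ _ _ _ _ _ H1 H2 (proj2 (HT _ _ H2)) Hf Hs Ht Hp) as [->|K].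
    + left. exists (subst sg2 r2). split; apply rt_refl.
    + right. left. exact K.
Qed.

Lemma Bpm_incl : forall (B : pairs F), ES_B B -> forall l r, Bpm B l r -> incl (vars r) (vars l).
Proof. intros B HB l r [H|H] z Hz; apply (HB _ _ H z); auto. Qed.

Lemma RB_root : forall (B R : pairs F), ES_B B -> TRS R -> left_linear R ->
  forall l2 r2 sg2 l1 r1 sg1 p u, R l2 r2 -> Bpm B l1 r1 ->
  subt_at (subst sg2 l2) p = Some (subst sg1 l1) ->
  replace_at (subst sg2 l2) p (subst sg1 r1) = Some u -> prime R (subst sg1 l1) ->
  joinable_B B R (subst sg2 r2) u \/ sym_step (PCPpm R B) (subst sg2 r2) u.
Proof.
  intros B R HB HT HL l2 r2 sg2 l1 r1 sg1 p u H2 H1 Hs Hu Hp.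
  destruct (pos_split _ _ _ Hs) as [[p1 [p2 [x [Hpp [K1 K2]]]]]|[f [ts Hf]]].
  - left. destruct (@var_data l2 sg2 p p1 p2 x _ (subst sg1 r1) Hpp K1 K2) as [y [Hy Hy2]].
    rewrite Hu in Hy2. pose proof (var_case_lin _ _ _ _ (HL _ _ H2) K1 Hy2) as ->.
    exists (subst sg2 r2), (subst (upd sg2 x y) r2). split; [|split].
    + apply rt_refl.
    + apply subst_Beq.
      intros z _. apply upd_rel. apply B_equiv_refl. apply Bpm_equiv. eapply step_at; eauto.
    + apply rt_step. apply rstep_root. auto.
  - destruct (crit (R:=R) (Bpm B) R _ _ _ _ _ _ _ H1 H2 (proj2 (HT _ _ H2)) Hf Hs Hu Hp) as [->|K].
    + left. exists (subst sg2 r2), (subst sg2 r2). split; [|split]; apply rt_refl.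
    + right. right. destruct K as [a [b [q [d [K1 K2]]]]]. exists a, b, q, d.
      split; auto. right. auto.
Qed.

Lemma BR_root : forall (B R : pairs F), ES_B B ->
  forall l2 r2 sg2 l1 r1 sg1 p t, Bpm B l2 r2 -> R l1 r1 ->
  subt_at (subst sg2 l2) p = Some (subst sg1 l1) ->
  replace_at (subst sg2 l2) p (subst sg1 r1) = Some t -> prime R (subst sg1 l1) ->
  joinable_B B R t (subst sg2 r2) \/ sym_step (PCPpm R B) t (subst sg2 r2).
Proof.
  intros B R HB l2 r2 sg2 l1 r1 sg1 p t H2 H1 Hs Ht Hp.
  destruct (pos_split _ _ _ Hs) as [[p1 [p2 [x [Hpp [K1 K2]]]]]|[f [ts Hf]]].
  - left. destruct (@var_data l2 sg2 p p1 p2 x _ (subst sg1 r1) Hpp K1 K2) as [y [Hy Hy2]].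
    rewrite Ht in Hy2.
    assert (Hxy : clos_refl_trans _ (rstep R) (sg2 x) y) by (apply rt_step; eapply step_at; eauto).
    exists (subst (upd sg2 x y) l2), (subst (upd sg2 x y) r2). split; [|split].
    + eapply var_case_rel; eauto. apply rt_refl'. apply rt_trans'. apply ctxc_rt. apply rstep_ctx.
    + apply Bpm_equiv. apply rstep_root. auto.
    + apply subst_rt.
      intros z _. apply upd_rel; auto using rt_refl'.
  - destruct (crit (R:=R) R (Bpm B) _ _ _ _ _ _ _ H1 H2 (Bpm_incl HB H2) Hf Hs Ht Hp) as [->|K].
    + left. exists (subst sg2 r2), (subst sg2 r2). split; [|split]; apply rt_refl.
    + right. left. destruct K as [a [b [q [d [K1 K2]]]]]. exists a, b, q, d.
      split; auto. left. auto.
Qed.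

End H.

Section I.
Context {F : Type}.
Implicit Types (t u s w v : term F) (sg : sub F) (p q : pos).

Lemma ctxc_or : forall (P Q : term F -> term F -> Prop), ctxc P -> ctxc Q ->
  ctxc (fun a b => P a b \/ Q a b).
Proof. intros P Q HP HQ f ts i a b Ha [H|H]; [left; eapply HP|right; eapply HQ]; eauto. Qed.

Lemma sym_step_sym : forall (E : pairs F) a b, sym_step E a b -> sym_step E b a.
Proof. intros E a b [H|H]; [right|left]; auto. Qed.

Lemma joinable_sym : forall (E : pairs F) a b, joinable E a b -> joinable E b a.
Proof. intros E a b [v [H1 H2]]. exists v; auto. Qed.

Lemma nabla_sym : forall (R : pairs F) s a b, nabla R s a b -> nabla R s b a.
Proof.
  intros R s a b [H1 [H2 [H3|H3]]]; repeat split; auto.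
  left; apply joinable_sym; auto. right; apply sym_step_sym; auto.
Qed.

Lemma nabla_triv : forall (R : pairs F) s t, rstep R s t -> nabla R s t t.
Proof.
  intros. split. apply t_step; auto. split. apply t_step; auto.
  left. exists t. split; apply rt_refl.
Qed.

Lemma put_ctx : forall (Rel : term F -> term F -> Prop), ctxc Rel ->
  forall f ts i a b c, nth_error ts i = Some a -> Rel b c ->
  Rel (Fun f (put i ts b)) (Fun f (put i ts c)).
Proof.
  intros Rel HR f ts i a b c Ha H. pose proof (HR f (put i ts b) i b c) as K.
  rewrite put_same in K. apply K; auto. eapply put_nth_same; eauto. eapply nth_some_lt; eauto.
Qed.

Lemma nabla_ctx : forall (R : pairs F) f ts i a b c, nth_error ts i = Some a -> nabla R a b c ->
  nabla R (Fun f ts) (Fun f (put i ts b)) (Fun f (put i ts c)).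
Proof.
  intros R f ts i a b c Ha [H1 [H2 H3]]. split; [|split].
  - eapply ctxc_trans; eauto. apply rstep_ctx.
  - eapply ctxc_trans; eauto. apply rstep_ctx.
  - apply (put_ctx (ctxc_or (@ctxc_joinable F R) (@ctxc_sym F (PCP R)))) with a; auto.
Qed.

Lemma tnabla_ctx : forall (B R : pairs F) f ts i a b c, nth_error ts i = Some a -> tnabla B R a b c ->
  tnabla B R (Fun f ts) (Fun f (put i ts b)) (Fun f (put i ts c)).
Proof.
  intros B R f ts i a b c Ha [H1 [H2 H3]]. split; [|split].
  - eapply ctxc_trans; eauto. apply rstep_ctx.
  - eapply ctxc_B_equiv; eauto.
  - apply (put_ctx (ctxc_or (@ctxc_joinable_B F B R) (@ctxc_sym F (PCPpm R B)))) with a; auto.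
Qed.

Lemma nonprime : forall (R : pairs F) z, ~ prime R z ->
  exists Q l3 r3 sg3, Q <> [] /\ subt_at z Q = Some (subst sg3 l3) /\ R l3 r3 /\ prime R (subst sg3 l3).
Proof.
  intros R z Hp. unfold prime in Hp.
  apply not_all_ex_not in Hp as [q Hp]. apply not_all_ex_not in Hp as [z' Hp].
  apply imply_to_and in Hp as [Hq Hp]. apply imply_to_and in Hp as [Hz Hnf].
  unfold NF in Hnf. apply NNPP in Hnf.
  destruct (innermost Hnf) as [q' [l [r [sg [K1 [K2 K3]]]]]].
  exists (q ++ q'), l, r, sg. split; [|split; [|split]]; auto.
  - intro H. apply app_eq_nil in H as [-> _]. auto.
  - rewrite subt_app, Hz. auto.
Qed.

Lemma local_RR : forall (R : pairs F), TRS R -> left_linear R ->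
  forall s p l1 r1 sg1 t Q l3 r3 sg3 v, R l1 r1 -> subt_at s p = Some (subst sg1 l1) ->
  replace_at s p (subst sg1 r1) = Some t ->
  subt_at (subst sg1 l1) Q = Some (subst sg3 l3) -> R l3 r3 -> prime R (subst sg3 l3) ->
  replace_at s (p ++ Q) (subst sg3 r3) = Some v ->
  joinable R v t \/ sym_step (PCP R) v t.
Proof.
  intros R HT HL s p l1 r1 sg1 t Q l3 r3 sg3 v H1 Hs Ht HQ H3 Hp Hv.
  destruct (replace_exists _ _ (subst sg3 r3) HQ) as [vl Hvl].
  pose proof (@RR_root F R HT HL l1 r1 sg1 l3 r3 sg3 Q vl H1 H3 HQ Hvl Hp) as K.
  rewrite (replace_app p Q s (subst sg3 r3) Hs Hvl) in Hv.
  exact (lift_pos (ctxc_or (@ctxc_joinable F R) (@ctxc_sym F (PCP R))) _ _ _ _ Hv Ht K).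
Qed.

Lemma local_BR : forall (B R : pairs F), ES_B B ->
  forall s p l1 r1 sg1 u Q l3 r3 sg3 v, Bpm B l1 r1 -> subt_at s p = Some (subst sg1 l1) ->
  replace_at s p (subst sg1 r1) = Some u ->
  subt_at (subst sg1 l1) Q = Some (subst sg3 l3) -> R l3 r3 -> prime R (subst sg3 l3) ->
  replace_at s (p ++ Q) (subst sg3 r3) = Some v ->
  joinable_B B R v u \/ sym_step (PCPpm R B) v u.
Proof.
  intros B R HB s p l1 r1 sg1 u Q l3 r3 sg3 v H1 Hs Hu HQ H3 Hp Hv.
  destruct (replace_exists _ _ (subst sg3 r3) HQ) as [vl Hvl].
  pose proof (@BR_root F B R HB l1 r1 sg1 l3 r3 sg3 Q vl H1 H3 HQ Hvl Hp) as K.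
  rewrite (replace_app p Q s (subst sg3 r3) Hs Hvl) in Hv.
  exact (lift_pos (ctxc_or (@ctxc_joinable_B F B R) (@ctxc_sym F (PCPpm R B))) _ _ _ _ Hv Hu K).
Qed.

End I.

Section J.
Context {F : Type}.
Implicit Types (t u s w v : term F) (sg : sub F) (p q : pos).

Lemma flip_or : forall (E : pairs F) (P : term F -> term F -> Prop), (forall a b, P a b -> P b a) ->
  forall a b, P a b \/ sym_step E a b -> P b a \/ sym_step E b a.
Proof. intros E P HP a b [H|H]; [left; auto|right; apply sym_step_sym; auto]. Qed.

Lemma root1 : forall (R : pairs F), TRS R -> left_linear R ->
  forall l2 r2 sg2 t, R l2 r2 -> rstep R (subst sg2 l2) t ->
  exists v, nabla R (subst sg2 l2) t v /\ nabla R (subst sg2 l2) v (subst sg2 r2).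
Proof.
  intros R HT HL l2 r2 sg2 t H2 Hst.
  pose proof Hst as [l1 [r1 [p [sg1 [H1 [Hs Ht]]]]]].
  destruct (classic (prime R (subst sg1 l1))) as [Hp|Hp].
  - exists t. split. apply nabla_triv; auto.
    split; [apply t_step; auto|split; [apply t_step; apply rstep_root; auto|]].
    eapply RR_root; eauto.
  - destruct (nonprime Hp) as [Q [l3 [r3 [sg3 [HQ [HQs [H3 Hp3]]]]]]].
    assert (Hsub : subt_at (subst sg2 l2) (p ++ Q) = Some (subst sg3 l3)) by (rewrite subt_app, Hs; auto).
    destruct (replace_exists _ _ (subst sg3 r3) Hsub) as [v Hv].
    assert (Hsv : rstep R (subst sg2 l2) v) by (eapply step_at; eauto).
    exists v. split.
    + split; [apply t_step; auto|split; [apply t_step; auto|]].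
      apply flip_or. apply joinable_sym. eapply local_RR with (p:=p) (l1:=l1) (r1:=r1) (sg1:=sg1) (Q:=Q) (l3:=l3) (r3:=r3) (sg3:=sg3); eauto.
    + split; [apply t_step; auto|split; [apply t_step; apply rstep_root; auto|]].
      eapply RR_root; eauto.
Qed.

Lemma root2a : forall (B R : pairs F), ES_B B -> TRS R -> left_linear R ->
  forall l2 r2 sg2 u, R l2 r2 -> rstep (Bpm B) (subst sg2 l2) u ->
  exists v, nabla R (subst sg2 l2) (subst sg2 r2) v /\ tnabla B R (subst sg2 l2) v u.
Proof.
  intros B R HB HT HL l2 r2 sg2 u H2 Hsu.
  pose proof Hsu as [l1 [r1 [p [sg1 [H1 [Hs Hu]]]]]].
  assert (Hst : rstep R (subst sg2 l2) (subst sg2 r2)) by (apply rstep_root; auto).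
  destruct (classic (prime R (subst sg1 l1))) as [Hp|Hp].
  - exists (subst sg2 r2). split. apply nabla_triv; auto.
    split; [apply t_step; auto|split; [apply Bpm_equiv; auto|]].
    eapply RB_root; eauto.
  - destruct (nonprime Hp) as [Q [l3 [r3 [sg3 [HQ [HQs [H3 Hp3]]]]]]].
    assert (Hsub : subt_at (subst sg2 l2) (p ++ Q) = Some (subst sg3 l3)) by (rewrite subt_app, Hs; auto).
    destruct (replace_exists _ _ (subst sg3 r3) Hsub) as [v Hv].
    assert (Hsv : rstep R (subst sg2 l2) v) by (eapply step_at; eauto).
    exists v. split.
    + split; [apply t_step; auto|split; [apply t_step; auto|]].
      apply flip_or. apply joinable_sym. eapply RR_root; eauto.
    + split; [apply t_step; auto|split; [apply Bpm_equiv; auto|]].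
      eapply local_BR with (p:=p) (l1:=l1) (r1:=r1) (sg1:=sg1) (Q:=Q) (l3:=l3) (r3:=r3) (sg3:=sg3); eauto.
Qed.

Lemma root2b : forall (B R : pairs F), ES_B B -> TRS R -> left_linear R ->
  forall l2 r2 sg2 t, Bpm B l2 r2 -> rstep R (subst sg2 l2) t ->
  exists v, nabla R (subst sg2 l2) t v /\ tnabla B R (subst sg2 l2) v (subst sg2 r2).
Proof.
  intros B R HB HT HL l2 r2 sg2 t H2 Hst.
  pose proof Hst as [l1 [r1 [p [sg1 [H1 [Hs Ht]]]]]].
  assert (Hsu : B_equiv B (subst sg2 l2) (subst sg2 r2)) by (apply Bpm_equiv; apply rstep_root; auto).
  destruct (classic (prime R (subst sg1 l1))) as [Hp|Hp].
  - exists t. split. apply nabla_triv; auto.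
    split; [apply t_step; auto|split; auto].
    eapply BR_root; eauto.
  - destruct (nonprime Hp) as [Q [l3 [r3 [sg3 [HQ [HQs [H3 Hp3]]]]]]].
    assert (Hsub : subt_at (subst sg2 l2) (p ++ Q) = Some (subst sg3 l3)) by (rewrite subt_app, Hs; auto).
    destruct (replace_exists _ _ (subst sg3 r3) Hsub) as [v Hv].
    assert (Hsv : rstep R (subst sg2 l2) v) by (eapply step_at; eauto).
    exists v. split.
    + split; [apply t_step; auto|split; [apply t_step; auto|]].
      apply flip_or. apply joinable_sym. eapply local_RR with (p:=p) (l1:=l1) (r1:=r1) (sg1:=sg1) (Q:=Q) (l3:=l3) (r3:=r3) (sg3:=sg3); eauto.
    + split; [apply t_step; auto|split; auto].
      eapply BR_root; eauto.
Qed.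

End J.

Section K.
Context {F : Type}.
Implicit Types (t u s w v : term F) (sg : sub F) (p q : pos).

Lemma parallel_join : forall (E1 E2 : pairs F) f ts i j a a' b b', i <> j ->
  nth_error ts i = Some a -> nth_error ts j = Some b -> rstep E1 a a' -> rstep E2 b b' ->
  rstep E2 (Fun f (put i ts a')) (Fun f (put i (put j ts b') a')) /\
  rstep E1 (Fun f (put j ts b')) (Fun f (put i (put j ts b') a')).
Proof.
  intros E1 E2 f ts i j a a' b b' Hij Ha Hb H1 H2.
  assert (Hi : i < length ts) by (eapply nth_some_lt; eauto).
  assert (Hj : j < length ts) by (eapply nth_some_lt; eauto).
  split.
  - rewrite put_comm; auto. apply rstep_ctx with b; auto.
    rewrite put_nth; auto. replace (j =? i) with false by (symmetry; apply Nat.eqb_neq; auto). auto.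
  - apply rstep_ctx with a; auto.
    rewrite put_nth; auto. replace (i =? j) with false by (symmetry; apply Nat.eqb_neq; auto). auto.
Qed.

Lemma main1 : forall (R : pairs F), TRS R -> left_linear R ->
  forall s t u, rstep R s t -> rstep R s u -> exists v, nabla R s t v /\ nabla R s v u.
Proof.
  intros R HT HL s. induction s as [x|f ts IH] using term_ind'; intros t u Hst Hsu;
  (destruct (rstep_inv Hst) as [[l [r [sg [Hl [Es Et]]]]]|[f1 [ts1 [i [a [a' [Es [Ha [Haa Et]]]]]]]]];
   [ rewrite Es in Hsu; rewrite Es; subst t;
     destruct (root1 HT HL _ _ _ Hl Hsu) as [v [K1 K2]]; exists v; split; apply nabla_sym; auto
   | ]);
  (destruct (rstep_inv Hsu) as [[l [r [sg [Hl [Es2 Eu]]]]]|[f2 [ts2 [j [b [b' [Es2 [Hb [Hbb Eu]]]]]]]]];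
   [ rewrite Es2 in Hst; rewrite Es2; subst u; apply root1; auto | ]); try discriminate.
  injection Es as <- <-. injection Es2 as <- <-. subst t u.
  destruct (Nat.eq_dec i j) as [<-|Hij].
  - rewrite Ha in Hb. injection Hb as <-.
    rewrite Forall_forall in IH. destruct (IH a (nth_error_In _ _ Ha) _ _ Haa Hbb) as [va [K1 K2]].
    exists (Fun f (put i ts va)). split; eapply nabla_ctx; eauto.
  - exists (Fun f (put i ts a')). split. apply nabla_triv; auto.
    destruct (parallel_join f ts Hij Ha Hb Haa Hbb) as [J1 J2].
    split; [apply t_step; auto|split; [apply t_step; auto|]].
    left. exists (Fun f (put i (put j ts b') a')). split; apply rt_step; auto.
Qed.

Lemma main2 : forall (B R : pairs F), ES_B B -> TRS R -> left_linear R ->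
  forall s t u, rstep R s t -> rstep (Bpm B) s u -> exists v, nabla R s t v /\ tnabla B R s v u.
Proof.
  intros B R HB HT HL s. induction s as [x|f ts IH] using term_ind'; intros t u Hst Hsu;
  (destruct (rstep_inv Hst) as [[l [r [sg [Hl [Es Et]]]]]|[f1 [ts1 [i [a [a' [Es [Ha [Haa Et]]]]]]]]];
   [ rewrite Es in Hsu; rewrite Es; subst t; apply root2a; auto
   | ]);
  (destruct (rstep_inv Hsu) as [[l [r [sg [Hl [Es2 Eu]]]]]|[f2 [ts2 [j [b [b' [Es2 [Hb [Hbb Eu]]]]]]]]];
   [ rewrite Es2 in Hst; rewrite Es2; subst u; apply root2b; auto | ]); try discriminate.
  injection Es as <- <-. injection Es2 as <- <-. subst t u.
  destruct (Nat.eq_dec i j) as [<-|Hij].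
  - rewrite Ha in Hb. injection Hb as <-.
    rewrite Forall_forall in IH. destruct (IH a (nth_error_In _ _ Ha) _ _ Haa Hbb) as [va [K1 K2]].
    exists (Fun f (put i ts va)). split. eapply nabla_ctx; eauto. eapply tnabla_ctx; eauto.
  - exists (Fun f (put i ts a')). split. apply nabla_triv; auto.
    destruct (parallel_join f ts Hij Ha Hb Haa Hbb) as [J1 J2].
    split; [apply t_step; auto|split; [apply Bpm_equiv; auto|]].
    left. exists (Fun f (put i ts a')), (Fun f (put i (put j ts b') a')).
    split; [apply rt_refl|split; [apply Bpm_equiv; auto|apply rt_step; auto]].
Qed.

End K.

Theorem lemma3p15 (F : Type) (B R : pairs F) :
  ES_B B -> TRS R -> left_linear R ->
  (forall s t u : term F, rstep R s t -> rstep R s u ->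
     exists v, nabla R s t v /\ nabla R s v u) /\
  (forall s t u : term F, rstep R s t -> sym_step B s u ->
     exists v, nabla R s t v /\ tnabla B R s v u).
Proof.
  intros HB HT HL. split.
  - apply main1; auto.
  - intros s t u H1 H2. apply main2; auto. apply sym_to_Bpm; auto.
Qed.
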